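(* In the setting below, for $z\in\mathbb{Z}/(n)$ let $A_z=\{((t_1,\dots,t_n),(s_1,\dots,s_n))\in T\rtimes_\circ S : t_{z'}=0 \text{ and } s_{z'}=0 \text{ for all } z'\neq z\}$. Then each $A_z$ is a left ideal of $T\rtimes_\circ S$ whose multiplicative group is abelian, and the additive group of $T\rtimes_\circ S$ is the direct sum of the additive groups of the $A_z$. If $\alpha$ is not trivial, then the multiplicative group of $T\rtimes_\circ S$ is metabelian but not abelian. Moreover, if the $A_z$ are finite and of pairwise relatively prime orders, then all Sylow subgroups of the multiplicative group of $T\rtimes_\circ S$ are abelian.
   Context: A left brace is a set $B$ with two operations $+,\cdot$ such that $(B,+)$ is an abelian group, $(B,\cdot)$ is a group and $a(b+c)+a=ab+ac$ for all $a,b,c$; $\lambda_a(b)=ab-a$. A left ideal is a subgroup $L$ of $(B,+)$ with $\lambda_b(L)\subseteq L$ for all $b\in B$. A left brace is trivial if $ab=a+b$ for all $a,b$. For a symmetric bi-additive map $b\colon T\times T\to S$, $\mathrm{O}(T,b)=\{f\in\mathrm{Aut}(T,+): b(f(x),f(y))=b(x,y)\ \forall x,y\}$. Setting: $n>1$; for each $z\in\mathbb{Z}/(n)$, $T_z,S_z$ are trivial left braces, $b_z\colon T_z\times T_z\to S_z$ is symmetric bilinear, and $f^{(z,z')}\colon S_z\to\mathrm{O}(T_{z'},b_{z'})$ ($z,z'\in\mathbb{Z}/(n)$) are group homomorphisms $s\mapsto f^{(z,z')}_s$ with $f^{(z_1,z)}_{s_1}f^{(z_2,z)}_{s_2}=f^{(z_2,z)}_{s_2}f^{(z_1,z)}_{s_1}$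 and $f^{(z,z)}_s=\mathrm{id}$. $T=\prod_z T_z$, $S=\prod_z S_z$, $b(t,t')=(b_z(t_z,t'_z))_z$, and $\alpha_{(s_1,\dots,s_n)}(t_1,\dots,t_n)=(f^{(1,1)}_{s_1}\cdots f^{(n,1)}_{s_n}(t_1),\dots,f^{(1,n)}_{s_1}\cdots f^{(n,n)}_{s_n}(t_n))$; $\alpha$ is trivial means $\alpha_s=\mathrm{id}$ for all $s$. $T\rtimes_\circ S$ is the set $T\times S$ with $(t_1,s_1)+(t_2,s_2)=(t_1+t_2,s_1+s_2+b(t_1,t_2))$ and $(t_1,s_1)(t_2,s_2)=(t_1+\alpha_{s_1}(t_2),s_1+s_2)$; it is a left brace. *)

(* Defs.v *)
From HB Require Import structures.
From mathcomp Require Import all_boot all_order all_algebra.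
Unset Printing Implicit Defensive.
Import GRing.Theory.
Local Open Scope ring_scope.

(* (We only use them on structures known to be groups.)                        *)

Definition is_subgroup {G : Type} (op : G -> G -> G) (e : G) (H : G -> Prop) :=
  [/\ H e, (forall x y, H x -> H y -> H (op x y))
    & (forall x y, H x -> op x y = e -> H y)].

Definition abelian_on {G : Type} (op : G -> G -> G) (H : G -> Prop) :=
  forall x y, H x -> H y -> op x y = op y x.

Inductive gen {G : Type} (op : G -> G -> G) (e : G) (X : G -> Prop) : G -> Prop :=
| gen_in x : X x -> gen op e X x
| gen_e : gen op e X e
| gen_op x y : gen op e X x -> gen op e X y -> gen op e X (op x y)
| gen_inv x y : gen op e X x -> op x y = e -> gen op e X y.

(* commutators [x,y] = x^-1 y^-1 x y, i.e. the c with (y x) c = x y *)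
Definition commutators {G : Type} (op : G -> G -> G) : G -> Prop :=
  fun c => exists x y, op (op y x) c = op x y.

Definition derived {G : Type} (op : G -> G -> G) (e : G) : G -> Prop :=
  gen op e (commutators op).

Definition metabelian {G : Type} (op : G -> G -> G) (e : G) :=
  abelian_on op (derived op e).

Definition is_abelian {G : Type} (op : G -> G -> G) := forall x y : G, op x y = op y x.

Definition has_card {G : Type} (P : G -> Prop) (k : nat) :=
  exists g : 'I_k -> G, injective g /\ (forall x, P x <-> exists i, g i = x).

Definition is_sylow {G : Type} (op : G -> G -> G) (e : G) (p : nat) (H : G -> Prop) :=
  [/\ prime p, is_subgroup op e H
    & exists N, has_card (fun _ : G => True) N /\ has_card H (p ^ logn p N)%N].

Section Brace.
Variables (n : nat) (T S : 'I_n -> zmodType).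
Variable b : forall z, T z -> T z -> S z.
Variable f : forall z z' : 'I_n, S z -> T z' -> T z'.

Definition carrier := ((forall z, T z) * (forall z, S z))%type.

Definition alpha (s : forall z, S z) (t : forall z, T z) : forall z, T z :=
  fun z => (\big[(fun g h : T z -> T z => g \o h)/(fun x : T z => x)]_(z' < n)
              f z' z (s z')) (t z).

Definition alpha_trivial := forall s t, alpha s t = t.

Definition badd (x y : carrier) : carrier :=
  (fun z => x.1 z + y.1 z, fun z => x.2 z + y.2 z + b z (x.1 z) (y.1 z)).

Definition bzero : carrier := (fun z => 0, fun z => 0).

Definition bmul (x y : carrier) : carrier :=
  (fun z => x.1 z + alpha x.2 y.1 z, fun z => x.2 z + y.2 z).

(* left ideal: additive subgroup L with lambda_a(L) ⊆ L, where
   lambda_a(x) = a x - a is the unique y with y + a = a x *)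
Definition left_ideal (L : carrier -> Prop) :=
  is_subgroup badd bzero L /\
  (forall a x y, L x -> badd y a = bmul a x -> L y).

Definition Acomp (z : 'I_n) : carrier -> Prop :=
  fun x => forall z', z' != z -> x.1 z' = 0 /\ x.2 z' = 0.

End Brace.

Arguments carrier {n}.
Arguments alpha {n T S}.
Arguments alpha_trivial {n T S}.
Arguments badd {n T S}.
Arguments bzero {n}.
Arguments bmul {n T S}.
Arguments left_ideal {n T S}.
Arguments Acomp {n}.

(* Main.v *)
Require Import Defs.
From HB Require Import structures.
From mathcomp Require Import all_boot all_order all_algebra all_fingroup all_solvable.
From Stdlib Require Import ClassicalEpsilon FunctionalExtensionality.
Import GRing.Theory.
Local Open Scope ring_scope.

Section Gen.
Variables (G : Type) (op : G -> G -> G) (e : G) (inv : G -> G).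
Hypothesis opA : forall x y z, op x (op y z) = op (op x y) z.
Hypothesis op1x : forall x, op e x = x.
Hypothesis opx1 : forall x, op x e = x.
Hypothesis opxV : forall x, op x (inv x) = e.
Variables (N : nat) (g : 'I_N -> G).
Hypothesis g_inj : injective g.
Hypothesis g_surj : forall x, exists i, g i = x.

Definition ginv x : 'I_N := proj1_sig (constructive_indefinite_description _ (g_surj x)).
Lemma ginvK x : g (ginv x) = x.
Proof. by rewrite /ginv; case: constructive_indefinite_description. Qed.

Definition phif x : 'I_N -> 'I_N := fun i => ginv (op (g i) x).
Lemma phif_inj x : injective (phif x).
Proof.
move=> i j /(congr1 g); rewrite !ginvK => /(congr1 (fun y => op y (inv x))).
by rewrite -!opA opxV !opx1 => /g_inj.
Qed.
Definition phi x : {perm 'I_N} := perm (phif_inj x).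

Lemma phiM x y : phi (op x y) = (phi x * phi y)%g.
Proof. by apply/permP => i; rewrite permM !permE /phif ginvK opA. Qed.

Lemma phi_inj : injective phi.
Proof.
move=> x y /permP H; have [i hi] := g_surj e.
have := H i; rewrite !permE /phif hi !op1x => /(congr1 g); by rewrite !ginvK.
Qed.

Lemma phi1 : phi e = 1%g.
Proof. by apply/permP => i; rewrite permE perm1 /phif opx1; apply: g_inj; rewrite ginvK. Qed.

Definition img {k} (gP : 'I_k -> G) : {set {perm 'I_N}} := [set phi (gP i) | i : 'I_k].

Lemma img_mem {k} {gP : 'I_k -> G} {P : G -> Prop} :
  (forall x, P x <-> exists i, gP i = x) -> forall x, (phi x \in img gP) <-> P x.
Proof.
move=> hc x; split.
  by case/imsetP=> i _ /phi_inj ->; apply/hc; exists i.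
by case/hc=> i <-; apply: imset_f.
Qed.

Lemma img_group {k} {gP : 'I_k -> G} {P : G -> Prop} :
  (forall x, P x <-> exists i, gP i = x) -> is_subgroup op e P -> group_set (img gP).
Proof.
move=> hc [P1 PM _]; apply/group_setP; split.
  by rewrite -phi1; apply/(img_mem hc).
move=> u v /imsetP[i _ ->] /imsetP[j _ ->]; rewrite -phiM; apply/(img_mem hc).
by apply: PM; apply/hc; eexists.
Qed.

Lemma img_card {k} (gP : 'I_k -> G) : injective gP -> #|img gP| = k.
Proof.
move=> hi; rewrite (card_imset _ (f := fun i => phi (gP i))) ?card_ord //.
by move=> a b /phi_inj /hi.
Qed.

Lemma img_sub {k} (gP : 'I_k -> G) {k'} {gQ : 'I_k' -> G} {Q : G -> Prop} :
  (forall x, Q x <-> exists i, gQ i = x) -> (forall i, Q (gP i)) -> img gP \subset img gQ.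
Proof.
move=> hc hPQ; apply/subsetP => u /imsetP[i _ ->]; by apply/(img_mem hc).
Qed.

Lemma sylow_gen p k (A : G -> Prop) (gA : 'I_k -> G) (H : G -> Prop) (gH : 'I_(p ^ logn p N) -> G) :
  prime p -> is_subgroup op e A -> abelian_on op A -> injective gA ->
  (forall x, A x <-> exists i, gA i = x) -> logn p k = logn p N ->
  is_subgroup op e H -> injective gH -> (forall x, H x <-> exists i, gH i = x) ->
  abelian_on op H.
Proof.
move=> pp sA abA iA cA lk sH iH cH.
have cT : forall x, (fun _ => True) x <-> exists i, g i = x by move=> x; split=> // _; apply: g_surj.
have sT : is_subgroup op e (fun _ => True) by split.
pose Gs := Group (img_group cT sT).
pose As := Group (img_group cA sA).
pose Hs := Group (img_group cH sH).
have [Q sylQ] := Sylow_exists p As.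
have AsGs : As \subset Gs by apply: (img_sub _ cT).
have HsGs : Hs \subset Gs by apply: (img_sub _ cT).
have cGs : #|Gs| = N by rewrite /= img_card.
have sylQG : (p.-Sylow(Gs) Q)%g.
  rewrite pHallE (subset_trans (pHall_sub sylQ) AsGs) /= (card_Hall sylQ) /= img_card //.
  by rewrite cGs !p_part lk.
have sylH : (p.-Sylow(Gs) Hs)%g.
  by rewrite pHallE HsGs /= img_card // cGs p_part.
have [x _ defH] := Sylow_trans sylQG sylH.
have abAs : abelian As.
  apply/centsP => u /imsetP[i _ ->] v /imsetP[j _ ->].
  by rewrite /commute -!phiM abA //; apply/cA; eexists.
have abH : abelian Hs by rewrite defH abelianJ (abelianS (pHall_sub sylQ)).
move=> a b Ha Hb; apply: phi_inj; rewrite !phiM.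
have := centsP abH (phi a); rewrite /= (img_mem cH) => /(_ Ha (phi b)).
by rewrite (img_mem cH) => /(_ Hb).
Qed.
End Gen.

Section Br.
Variables (n : nat) (T S : 'I_n -> zmodType).
Variable b : forall z, T z -> T z -> S z.
Variable f : forall z z' : 'I_n, S z -> T z' -> T z'.
Hypothesis hbDl : forall z (x y w : T z), b z (x + y) w = b z x w + b z y w.
Hypothesis hbDr : forall z (x y w : T z), b z w (x + y) = b z w x + b z w y.
Hypothesis hfD : forall z z' s (x y : T z'), f z z' s (x + y) = f z z' s x + f z z' s y.
Hypothesis hfbij : forall z z' s, bijective (f z z' s).
Hypothesis hfM : forall z z' (s1 s2 : S z) (t : T z'), f z z' (s1 + s2) t = f z z' s1 (f z z' s2 t).
Hypothesis hfC : forall z1 z2 z (s1 : S z1) (s2 : S z2) (t : T z),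
      f z1 z s1 (f z2 z s2 t) = f z2 z s2 (f z1 z s1 t).
Hypothesis hfd : forall z (s : S z) (t : T z), f z z s t = t.

Lemma dbl0 (V : zmodType) (u : V) : u + u = u -> u = 0.
Proof. by move=> h; apply: (addrI u); rewrite addr0 h. Qed.
Lemma b0l z (y : T z) : b z 0 y = 0.
Proof. by apply: dbl0; rewrite -hbDl addr0. Qed.
Lemma b0r z (y : T z) : b z y 0 = 0.
Proof. by apply: dbl0; rewrite -hbDr addr0. Qed.

Lemma f0 z z' (t : T z') : f z z' 0 t = t.
Proof.
have [g _ gK] := hfbij z z' 0.
by rewrite -{2}(gK t) -[in RHS](addr0 (0 : S z)) hfM !gK.
Qed.
Lemma fz z z' s : f z z' s 0 = 0.
Proof. by apply: dbl0; rewrite -hfD addr0. Qed.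

Definition compB z (s : forall z, S z) : T z -> T z :=
  \big[(fun g h : T z -> T z => g \o h)/(fun x : T z => x)]_(z' < n) f z' z (s z').

Lemma alphaE s t z : alpha f s t z = compB z s (t z).
Proof. by []. Qed.

Lemma compB_add z s (x y : T z) : compB z s (x + y) = compB z s x + compB z s y.
Proof.
rewrite /compB; apply: (big_rec (fun h : T z -> T z => forall x y, h (x + y) = h x + h y)) => //.
by move=> i h _ IH x' y' /=; rewrite IH hfD.
Qed.
Lemma compB0 z s : compB z s 0 = 0.
Proof. by apply: dbl0; rewrite -compB_add addr0. Qed.
Lemma compBN z s (x : T z) : compB z s (- x) = - compB z s x.
Proof. by apply: (addrI (compB z s x)); rewrite -compB_add !subrr compB0. Qed.

Lemma compB_id z s : (forall z', z' != z -> s z' = 0) -> forall x, compB z s x = x.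
Proof.
move=> hs; rewrite /compB; apply: (big_rec (fun h : T z -> T z => forall x, h x = x)) => //.
move=> i h _ IH x /=; rewrite IH; case: (eqVneq i z) => [->|ne]; first by rewrite hfd.
by rewrite hs // f0.
Qed.

Lemma compB_comp z s1 s2 x :
  compB z (fun z => s1 z + s2 z) x = compB z s1 (compB z s2 x).
Proof.
rewrite /compB.
pose K := fun h1 h2 h3 : T z -> T z => (forall x, h1 x = h2 (h3 x)) /\
   (forall i (a : S i) x, h2 (f i z a x) = f i z a (h2 x)).
suff [] : K (\big[(fun g h : T z -> T z => g \o h)/(fun x : T z => x)]_(z' < n) f z' z (s1 z' + s2 z'))
  (\big[(fun g h : T z -> T z => g \o h)/(fun x : T z => x)]_(z' < n) f z' z (s1 z'))
  (\big[(fun g h : T z -> T z => g \o h)/(fun x : T z => x)]_(z' < n) f z' z (s2 z')) by [].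
apply: big_rec3 => //= i h1 h2 h3 _ [H1 H2]; split.
  by move=> y; rewrite /comp H1 hfM -H2.
by move=> j a y; rewrite /comp H2 hfC.
Qed.

Lemma pairE (x y : carrier T S) : (forall z, x.1 z = y.1 z) -> (forall z, x.2 z = y.2 z) -> x = y.
Proof.
case: x y => [x1 x2] [y1 y2] /= h1 h2.
by rewrite (functional_extensionality_dep _ _ h1) (functional_extensionality_dep _ _ h2).
Qed.

Definition binv (x : carrier T S) : carrier T S :=
  (fun z => - compB z (fun z => - x.2 z) (x.1 z), fun z => - x.2 z).

Lemma bmulA x y w : bmul f x (bmul f y w) = bmul f (bmul f x y) w.
Proof.
apply: pairE => z /=; last by rewrite addrA.
by rewrite !alphaE /= compB_add compB_comp addrA.
Qed.
Lemma bmul1x x : bmul f (bzero T S) x = x.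
Proof.
by apply: pairE => z /=; rewrite ?add0r // alphaE compB_id.
Qed.
Lemma bmulx1 x : bmul f x (bzero T S) = x.
Proof. by apply: pairE => z /=; rewrite ?addr0 // alphaE compB0 addr0. Qed.
Lemma bmulxV x : bmul f x (binv x) = bzero T S.
Proof.
apply: pairE => z /=; last by rewrite subrr.
rewrite alphaE /= compBN -compB_comp compB_id ?subrr // => z' _; by rewrite subrr.
Qed.


Lemma sum_comp (a : 'I_n -> carrier T S) (r : seq 'I_n) :
  (forall z, Acomp T S z (a z)) -> uniq r -> forall z,
  (\big[badd b/bzero T S]_(i <- r) a i).1 z = (if z \in r then (a z).1 z else 0) /\
  (\big[badd b/bzero T S]_(i <- r) a i).2 z = (if z \in r then (a z).2 z else 0).
Proof.
move=> hA; elim: r => [|i r IH] /=; first by rewrite big_nil.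
case/andP=> ir ur z; rewrite big_cons in_cons.
set B := \big[_/_]_(_ <- r) _.
have [h1 h2] := IH ur z; rewrite /badd /=.
move: h1 h2; case: (eqVneq z i) => [->|ne] /= h1 h2.
  by rewrite h1 h2 (negbTE ir) addr0 b0r !addr0.
have [a1 a2] := hA i z ne.
by rewrite h1 h2 a1 a2 b0l !add0r addr0.
Qed.

Arguments sum_comp {a r}.
Lemma sum_compE (a : 'I_n -> carrier T S) :
  (forall z, Acomp T S z (a z)) -> forall z,
  (\big[badd b/bzero T S]_(i < n) a i).1 z = (a z).1 z /\
  (\big[badd b/bzero T S]_(i < n) a i).2 z = (a z).2 z.
Proof.
move=> hA z; have := sum_comp hA (index_enum_uniq _) z.
by rewrite mem_index_enum.
Qed.

Arguments sum_compE {a}.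
Lemma dsum_ex (x : carrier T S) : exists a : 'I_n -> carrier T S,
  (forall z, Acomp T S z (a z)) /\ x = \big[badd b/bzero T S]_(z < n) a z.
Proof.
pose a z : carrier T S := (fun z' => if z' == z then x.1 z' else 0, fun z' => if z' == z then x.2 z' else 0).
have hA : forall z, Acomp T S z (a z) by move=> z z' ne; rewrite /= (negbTE ne).
exists a; split => //; apply: pairE => z; have [h1 h2] := sum_compE hA z.
  by rewrite h1 /= eqxx.
by rewrite h2 /= eqxx.
Qed.

Lemma dsum_uniq (a a' : 'I_n -> carrier T S) :
  (forall z, Acomp T S z (a z)) -> (forall z, Acomp T S z (a' z)) ->
  \big[badd b/bzero T S]_(z < n) a z = \big[badd b/bzero T S]_(z < n) a' z ->
  forall z, a z = a' z.
Proof.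
move=> hA hA' E z; apply: pairE => z'; case: (eqVneq z' z) => [->|ne].
- by have [<- _] := sum_compE hA z; have [<- _] := sum_compE hA' z; rewrite E.
- by have [-> _] := hA z z' ne; have [-> _] := hA' z z' ne.
- by have [_ <-] := sum_compE hA z; have [_ <-] := sum_compE hA' z; rewrite E.
- by have [_ ->] := hA z z' ne; have [_ ->] := hA' z z' ne.
Qed.

Lemma part1 z : left_ideal b f (Acomp T S z) /\ abelian_on (bmul f) (Acomp T S z).
Proof.
split; first split.
- split.
  + by [].
  + move=> x y hx hy z' ne; have [x1 x2] := hx z' ne; have [y1 y2] := hy z' ne.
    by rewrite /= x1 x2 y1 y2 b0l !addr0.
  + move=> x y hx E z' ne; move: (congr1 (fun w => w.1 z') E) (congr1 (fun w => w.2 z') E) => /= E1 E2.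
    have [x1 x2] := hx z' ne; rewrite x1 add0r in E1; rewrite x1 x2 E1 b0l add0r addr0 in E2.
    by [].
- move=> a x y hx E z' ne; move: (congr1 (fun w => w.1 z') E) (congr1 (fun w => w.2 z') E) => /= E1 E2.
  have [x1 x2] := hx z' ne.
  rewrite alphaE x1 compB0 addr0 addrC in E1; have y1 : y.1 z' = 0.
    by apply: (addrI (a.1 z')); rewrite E1 addr0.
  split => //; rewrite y1 b0l x2 addr0 addrC in E2.
  by apply: (addrI (a.2 z')); rewrite E2 addr0.
- move=> x y hx hy; apply: pairE => z' /=; last by rewrite addrC.
  rewrite !alphaE; case: (eqVneq z' z) => [->|ne].
    rewrite (compB_id z x.2) ?(compB_id z y.2); first by rewrite addrC.
      by move=> w ne; have [] := hy w ne.
    by move=> w ne; have [] := hx w ne.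
  have [x1 _] := hx z' ne; have [y1 _] := hy z' ne.
  by rewrite x1 y1 !compB0 addr0.
Qed.

Lemma part3 : ~ alpha_trivial f -> metabelian (bmul f) (bzero T S) /\ ~ is_abelian (bmul f).
Proof.
move=> nt; split.
  have D0 : forall x, derived (bmul f) (bzero T S) x -> forall z, x.2 z = 0.
    move=> x; elim => {x}.
    - move=> c [x [y E]] z; have := congr1 (fun w => w.2 z) E => /= E2.
      by apply: (addrI (y.2 z + x.2 z)); rewrite E2 addr0 addrC.
    - by [].
    - by move=> x y _ hx _ hy z /=; rewrite hx hy addr0.
    - move=> x y _ hx E z; have := congr1 (fun w => w.2 z) E => /= E2.
      by rewrite hx add0r in E2.
  move=> x y hx hy; apply: pairE => z /=; last by rewrite addrC.
  rewrite !alphaE (compB_id z x.2) ?(compB_id z y.2); first by rewrite addrC.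
    by move=> w _; apply: D0.
  by move=> w _; apply: D0.
move=> hab; apply: nt => s t; apply: functional_extensionality_dep => z.
have := congr1 (fun w => w.1 z) (hab (fun z => 0, s) (t, fun z => 0)) => /=.
by rewrite !alphaE compB0 add0r addr0.
Qed.


Lemma compB_inj z s : injective (compB z s).
Proof.
rewrite /compB; apply: (big_rec (fun h : T z -> T z => injective h)) => //.
move=> i h _ IH x y /= E; apply: IH; have [g gK _] := hfbij i z (s i).
by rewrite -(gK (h x)) -(gK (h y)); congr g.
Qed.

Lemma Acomp_sub z : is_subgroup (bmul f) (bzero T S) (Acomp T S z).
Proof.
split.
- by [].
- move=> x y hx hy z' ne; have [x1 x2] := hx z' ne; have [y1 y2] := hy z' ne.
  by rewrite /= alphaE x1 x2 y1 y2 compB0 !addr0.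
- move=> x y hx E z' ne; move: (congr1 (fun w => w.1 z') E) (congr1 (fun w => w.2 z') E) => /= E1 E2.
  have [x1 x2] := hx z' ne; rewrite x2 add0r in E2; split => //.
  rewrite x1 add0r alphaE -(compB0 z' x.2) in E1; exact: compB_inj E1.
Qed.

Lemma fm (F : 'I_n -> nat) : foldr muln 1 [seq F z | z : 'I_n] = (\prod_(z < n) F z)%N.
Proof.
have fm0 : forall (r : seq 'I_n), foldr muln 1 (map F r) = (\prod_(x <- r) F x)%N.
  by elim=> [|x r IH]; rewrite ?big_nil ?big_cons //= IH.
by rewrite /image_mem fm0 enumT.
Qed.

Lemma part4 : (0 < n)%N ->
  (exists ord : 'I_n -> nat, (forall z, has_card (Acomp T S z) (ord z)) /\
          (forall z z', z != z' -> coprime (ord z) (ord z'))) ->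
       forall (p : nat) (H : carrier T S -> Prop),
         is_sylow (bmul f) (bzero T S) p H -> abelian_on (bmul f) H.
Proof.
move=> n0 [ord [hord hcop]] p H [pp sH [N [[g [ginj gc]] [gH [gHinj gHc]]]]].
have gs : forall x, exists i, g i = x by move=> x; apply/gc.
pose gA z := proj1_sig (constructive_indefinite_description _ (hord z)).
have hgA : forall z, injective (gA z) /\ (forall x, Acomp T S z x <-> exists i, gA z i = x).
  by move=> z; rewrite /gA; case: constructive_indefinite_description.
have [z0 hz0] : exists z0 : 'I_n, forall z, z != z0 -> ~~ (p %| ord z)%N.
  case: (pickP (fun z => (p %| ord z)%N)) => [z0 hz0 | none].
    exists z0 => z ne; apply/negP => hz.
    have := hcop z0 z; rewrite eq_sym ne => /(_ isT); rewrite /coprime => /eqP hg.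
    have : (p %| gcdn (ord z0) (ord z))%N by rewrite dvdn_gcd hz0 hz.
    by rewrite hg dvdn1 => /eqP p1; rewrite p1 in pp.
  by exists (Ordinal n0) => z _; rewrite none.
pose F := {dffun forall z : 'I_n, 'I_(ord z)}.
pose h (phi : F) : carrier T S := \big[badd b/bzero T S]_(z < n) gA z (phi z).
have hA : forall phi : F, forall z, Acomp T S z (gA z (phi z)).
  by move=> phi z; apply/(hgA z).2; eexists.
have h_inj : injective h.
  move=> phi phi' E; apply/ffunP => z; apply: (hgA z).1.
  exact: (@dsum_uniq (fun z => gA z (phi z)) (fun z => gA z (phi' z)) (hA phi) (hA phi') E z).
have h_surj : forall x, exists phi : F, h phi = x.
  move=> x; have [a [ha ->]] := dsum_ex x.
  have hex : forall z, exists i, gA z i = a z by move=> z; apply/(hgA z).2.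
  exists (finfun (fun z => proj1_sig (constructive_indefinite_description _ (hex z)))).
  rewrite /h; apply: eq_bigr => z _; rewrite ffunE.
  by case: constructive_indefinite_description.
have cF : #|F| = N.
  apply/eqP; rewrite eqn_leq; apply/andP; split.
    have -> : N = #|'I_N| by rewrite card_ord.
    apply: (@leq_card _ _ (fun phi => ginv _ _ _ gs (h phi))).
    move=> phi phi' /(congr1 g); rewrite !ginvK; exact: h_inj.
  apply: (@leq_trans #|[set ginv _ _ _ gs (h phi) | phi : F]|); last exact: leq_imset_card.
  rewrite -{1}(card_ord N) -cardsT; apply: subset_leq_card; apply/subsetP => i _.
  have [phi hphi] := h_surj (g i); apply/imsetP; exists phi => //.
  by apply: ginj; rewrite ginvK hphi.
have lN : logn p (ord z0) = logn p N.
  rewrite -cF card_dep_ffun fm.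
  rewrite (eq_bigr (fun z => ord z)) => [|z _]; last by rewrite card_ord.
  rewrite (bigD1 z0) //= mulnC logn_Gauss //.
  apply: (big_ind (fun m => coprime p m)); first exact: coprimen1.
    by move=> a c; rewrite coprimeMr => -> ->.
  by move=> z ne; rewrite prime_coprime // hz0.
apply: (sylow_gen _ _ _ _ bmulA bmul1x bmulx1 bmulxV _ _ ginj gs _ _ _ _ _ _ pp (Acomp_sub z0) (part1 z0).2 (hgA z0).1 (hgA z0).2 lN sH gHinj).
by move=> x; apply: gHc.
Qed.

End Br.

Theorem proposition2p3 (n : nat) (T S : 'I_n -> zmodType)
  (b : forall z, T z -> T z -> S z)
  (f : forall z z' : 'I_n, S z -> T z' -> T z') :
  (1 < n)%N ->
  (* b_z symmetric, bi-additive *)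
  (forall z (x y : T z), b z x y = b z y x) ->
  (forall z (x y w : T z), b z (x + y) w = b z x w + b z y w) ->
  (forall z (x y w : T z), b z w (x + y) = b z w x + b z w y) ->
  (* f^{(z,z')}_s is in O(T_{z'}, b_{z'}) *)
  (forall z z' s (x y : T z'), f z z' s (x + y) = f z z' s x + f z z' s y) ->
  (forall z z' s, bijective (f z z' s)) ->
  (forall z z' s (x y : T z'), b z' (f z z' s x) (f z z' s y) = b z' x y) ->
  (* s |-> f^{(z,z')}_s is a group homomorphism *)
  (forall z z' (s1 s2 : S z) (t : T z'), f z z' (s1 + s2) t = f z z' s1 (f z z' s2 t)) ->
  (* commutation and diagonal conditions *)
  (forall z1 z2 z (s1 : S z1) (s2 : S z2) (t : T z),
      f z1 z s1 (f z2 z s2 t) = f z2 z s2 (f z1 z s1 t)) ->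
  (forall z (s : S z) (t : T z), f z z s t = t) ->
  [/\ (* each A_z is a left ideal with abelian multiplicative group *)
      (forall z, left_ideal b f (Acomp T S z) /\ abelian_on (bmul f) (Acomp T S z)),
      (* (B,+) is the internal direct sum of the (A_z,+) *)
      (forall x : carrier T S, exists a : 'I_n -> carrier T S,
          (forall z, Acomp T S z (a z)) /\ x = \big[badd b/bzero T S]_(z < n) a z)
      /\ (forall a a' : 'I_n -> carrier T S,
          (forall z, Acomp T S z (a z)) -> (forall z, Acomp T S z (a' z)) ->
          \big[badd b/bzero T S]_(z < n) a z = \big[badd b/bzero T S]_(z < n) a' z ->
          forall z, a z = a' z),
      (* if alpha is non-trivial, (B,.) is metabelian and non-abelian *)
      (~ alpha_trivial f -> metabelian (bmul f) (bzero T S) /\ ~ is_abelian (bmul f))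
    & (* finite A_z of pairwise coprime orders => abelian Sylow subgroups *)
      ((exists ord : 'I_n -> nat, (forall z, has_card (Acomp T S z) (ord z)) /\
          (forall z z', z != z' -> coprime (ord z) (ord z'))) ->
       forall (p : nat) (H : carrier T S -> Prop),
         is_sylow (bmul f) (bzero T S) p H -> abelian_on (bmul f) H)].
Proof.
move=> n1 hsym hbDl hbDr hfD hfbij hfb hfM hfC hfd; split.
- by move=> z; apply: part1.
- split; first exact: dsum_ex.
  exact: dsum_uniq.
- exact: part3.
- apply: part4 => //; exact: ltnW.
Qed.
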